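(* Let $m \geq 4$, let $D \in \mathbb{R}^{m \times 4}$ have full (column) rank, and let $b \in \mathbb{R}^m$. Let $E \in \mathbb{S}^4$ and $c \in \mathbb{R}^4$ be given by $E_{23}=E_{32}=\tfrac12$, all other entries of $E$ zero, and $c=(0,0,0,-1)^\intercal$, so that for $x=(x_1,x_2,x_3,x_4)^\intercal$ we have $r(x) := x^\intercal E x + c^\intercal x = x_2x_3 - x_4$. Consider the nonconvex problem $$\text{(NC1)}:\quad \underset{x\in\mathbb{R}^4}{\mathrm{minimize}}\ \tfrac12\|Dx-b\|_2^2 \quad \text{s.t. } r(x)=0,$$ and the convex problem $$\text{(P)}:\quad \underset{X\in\mathbb{S}^4,\ x\in\mathbb{R}^4}{\mathrm{minimize}}\ \tfrac12\operatorname{tr}(D^\intercal D X) - b^\intercal D x + \tfrac12 b^\intercal b \quad \text{s.t. } X \succeq xx^\intercal,\ \operatorname{tr}(EX)+c^\intercal x = 0.$$ Then (NC1) and (P) are equivalent (in particular, they have the same optimal value), and the optimal solution of (NC1) is attained.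
   Context: $\mathbb{S}^4$ denotes the space of real symmetric $4\times 4$ matrices, and $X \succeq xx^\intercal$ means $X - xx^\intercal$ is positive semidefinite. In the application, $x=(k_v,k_g,g_*,u)$ with $u$ a dummy variable representing $k_g g_*$, so the constraint $r(x)=0$ encodes $k_g g_* = u$. *)

(* Defs.v *)
From HB Require Import structures.
From mathcomp Require Import all_boot all_order all_algebra.
From mathcomp Require Import reals.
Set Implicit Arguments. Unset Strict Implicit. Unset Printing Implicit Defensive.
Import Order.TTheory GRing.Theory Num.Theory.
Local Open Scope ring_scope.

Section Defs.
Variable R : realType.

(* E in S^4 with E_23 = E_32 = 1/2 (1-based), all other entries 0. *)
Definition Emx : 'M[R]_4 :=
  \matrix_(i < 4, j < 4)
    (if ((i == 1%N :> nat) && (j == 2%N :> nat)) || ((i == 2%N :> nat) && (j == 1%N :> nat))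
     then 2^-1 else 0).

Definition cvec : 'cV[R]_4 := \col_(i < 4) (if i == 3%N :> nat then -1 else 0).

Definition rfun (x : 'cV[R]_4) : R := (x^T *m Emx *m x) 0 0 + (cvec^T *m x) 0 0.

Definition symmetric_mx n (A : 'M[R]_n) : Prop := A^T = A.

Definition psd n (A : 'M[R]_n) : Prop :=
  symmetric_mx A /\ forall v : 'cV[R]_n, 0 <= (v^T *m A *m v) 0 0.

Definition nc1_obj m (D : 'M[R]_(m, 4)) (b : 'cV[R]_m) (x : 'cV[R]_4) : R :=
  2^-1 * (((D *m x - b)^T *m (D *m x - b)) 0 0).

Definition nc1_feas (x : 'cV[R]_4) : Prop := rfun x = 0.

Definition P_obj m (D : 'M[R]_(m, 4)) (b : 'cV[R]_m) (X : 'M[R]_4) (x : 'cV[R]_4) : R :=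
  2^-1 * \tr (D^T *m D *m X) - (b^T *m D *m x) 0 0 + 2^-1 * ((b^T *m b) 0 0).

Definition P_feas (X : 'M[R]_4) (x : 'cV[R]_4) : Prop :=
  symmetric_mx X /\ psd (X - x *m x^T) /\ \tr (Emx *m X) + (cvec^T *m x) 0 0 = 0.

End Defs.

(* Main.v *)
Require Import Defs.
From HB Require Import structures.
From mathcomp Require Import all_boot all_order all_algebra.
From mathcomp Require Import reals.
From mathcomp Require Import ring lra zify.
From mathcomp Require Import boolp classical_sets functions topology normedtype derive.
Import Order.TTheory GRing.Theory Num.Theory.
Import numFieldNormedType.Exports.
Local Open Scope classical_set_scope.
Local Open Scope ring_scope.
Set Implicit Arguments. Unset Strict Implicit. Unset Printing Implicit Defensive.

Section Main.
Variable R : realType.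
Notation i0 := (@Ordinal 4 0 isT).
Notation i1 := (@Ordinal 4 1 isT).
Notation i2 := (@Ordinal 4 2 isT).
Notation i3 := (@Ordinal 4 3 isT).

Lemma sum4 (F : 'I_4 -> R) : \sum_i F i = F i0 + F i1 + F i2 + F i3.
Proof.
rewrite !big_ord_recl big_ord0 addr0 !addrA.
by congr (_+_+_+_); apply: congr1; apply: val_inj.
Qed.

Lemma rfunE (x : 'cV[R]_4) : rfun x = x i1 0 * x i2 0 - x i3 0.
Proof.
rewrite /rfun !mxE !sum4 !(mxE, sum4) /=.
by field.
Qed.

Lemma trEE (X : 'M[R]_4) : \tr (Emx R *m X) = 2^-1 * X i1 i2 + 2^-1 * X i2 i1.
Proof.
rewrite /mxtrace sum4 !(mxE, sum4) /=.
by field.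
Qed.

Lemma cE (x : 'cV[R]_4) : ((cvec R)^T *m x) 0 0 = - x i3 0.
Proof. rewrite !mxE sum4 !mxE /=; by field. Qed.

Definition Bf n (S : 'M[R]_n) (u v : 'cV[R]_n) : R := (u^T *m S *m v) 0 0.
Definition dot n (u v : 'cV[R]_n) : R := (u^T *m v) 0 0.

Lemma dotE n (u v : 'cV[R]_n) : dot u v = \sum_(i < n) u i 0 * v i 0.
Proof. by rewrite /dot mxE; apply: eq_bigr => i _; rewrite mxE. Qed.

Lemma dot_comb n (u v : 'cV[R]_n) (a b : R) :
  b * dot (u + a *: v) (u + a *: v) + a * dot (u - b *: v) (u - b *: v)
  = (a + b) * dot u u + a * b * (a + b) * dot v v.
Proof.
rewrite !dotE !mulr_sumr -!big_split /=; apply: eq_bigr => i _; rewrite !mxE; ring.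
Qed.

Lemma BfDl n (S : 'M[R]_n) u1 u2 v t : Bf S (u1 + t *: u2) v = Bf S u1 v + t * Bf S u2 v.
Proof. by rewrite /Bf linearD linearZ /= !mulmxDl -!scalemxAl !mxE. Qed.

Lemma BfDr n (S : 'M[R]_n) u v1 v2 t : Bf S u (v1 + t *: v2) = Bf S u v1 + t * Bf S u v2.
Proof. by rewrite /Bf mulmxDr -scalemxAr !mxE. Qed.

Lemma Bf_sym n (S : 'M[R]_n) u v : S^T = S -> Bf S v u = Bf S u v.
Proof.
move=> sS; rewrite /Bf -[in LHS](trmxK (v^T *m S *m u)) mxE.
by rewrite !trmx_mul trmxK sS mulmxA.
Qed.

Lemma CS n (S : 'M[R]_n) u v : S^T = S -> (forall w, 0 <= Bf S w w) ->
  Bf S u v ^+ 2 <= Bf S u u * Bf S v v.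
Proof.
move=> sS pS.
have H t : 0 <= Bf S u u + 2 * t * Bf S u v + t ^+ 2 * Bf S v v.
  have := pS (u + t *: v); rewrite BfDl !BfDr (Bf_sym _ _ sS).
  by congr (0 <= _); ring.
have hv := pS v; have hu := pS u.
have [C0|Cpos] := eqVneq (Bf S v v) 0.
  have [B0|Bn0] := eqVneq (Bf S u v) 0.
    by rewrite B0 C0; lra.
  have := H (- (Bf S u u + 1) / (2 * Bf S u v)).
  rewrite C0 mulr0 addr0.
  have -> : 2 * (- (Bf S u u + 1) / (2 * Bf S u v)) * Bf S u v = - (Bf S u u + 1).
    by field.
  lra.
have Cp : 0 < Bf S v v by rewrite lt_def Cpos hv.
have := H (- Bf S u v / Bf S v v).
have -> : Bf S u u + 2 * (- Bf S u v / Bf S v v) * Bf S u v +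
   (- Bf S u v / Bf S v v) ^+ 2 * Bf S v v
   = (Bf S u u * Bf S v v - Bf S u v ^+ 2) / Bf S v v.
  by field.
by rewrite ler_pdivlMr // mul0r subr_ge0.
Qed.

Lemma dotC n (u v : 'cV[R]_n) : dot u v = dot v u.
Proof. by rewrite !dotE; apply: eq_bigr => i _; rewrite mulrC. Qed.

Lemma dotB n (u v : 'cV[R]_n) : dot (u - v) (u - v) = dot u u - 2 * dot v u + dot v v.
Proof.
rewrite !dotE mulr_sumr -sumrN -!big_split /=; apply: eq_bigr => i _; rewrite !mxE; ring.
Qed.

Lemma Pobj_split m (D : 'M[R]_(m, 4)) b X x :
  P_obj D b X x = nc1_obj D b x + 2^-1 * \tr (D^T *m D *m (X - x *m x^T)).
Proof.
have -> : \tr (D^T *m D *m (X - x *m x^T)) = \tr (D^T *m D *m X) - dot (D *m x) (D *m x).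
  rewrite mulmxBr linearB /= (mulmxA (D^T *m D) x) (mxtrace_mulC (D^T *m D *m x)).
  by rewrite /mxtrace big_ord1 /dot trmx_mul !mulmxA.
rewrite /P_obj /nc1_obj.
have -> : (b^T *m D *m x) 0 0 = dot b (D *m x) by rewrite /dot mulmxA.
rewrite -/(dot b b) -/(dot (D *m x - b) (D *m x - b)) dotB (dotC b).
by field.
Qed.

Definition dj m (D : 'M[R]_(m, 4)) j := (row j D)^T.

Lemma tr_Bf m (D : 'M[R]_(m, 4)) S :
  \tr (D^T *m D *m S) = \sum_j Bf S (dj D j) (dj D j).
Proof.
rewrite -mulmxA mxtrace_mulC /mxtrace; apply: eq_bigr => j _.
rewrite /Bf /dj trmxK !mxE; apply: eq_bigr => l _; rewrite !mxE; congr (_ * _).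
by apply: eq_bigr => k _; rewrite !mxE.
Qed.

Lemma Dw_Bf m (D : 'M[R]_(m, 4)) S e j :
  (D *m (S *m e)) j 0 = Bf S (dj D j) e.
Proof.
have -> : (D *m (S *m e)) j 0 = (row j (D *m (S *m e))) 0 0 by rewrite [RHS]mxE.
by rewrite row_mul /Bf /dj trmxK mulmxA.
Qed.

Lemma relax m (D : 'M[R]_(m, 4)) b (p : R) :
  (forall x, nc1_feas x -> p <= nc1_obj D b x) ->
  forall X x, P_feas X x -> p <= P_obj D b X x.
Proof.
move=> hp X x [sX [[sS pS] hc]].
rewrite Pobj_split tr_Bf.
move: sS pS; set S := X - x *m x^T => sS pS.
set T := \sum_j _.
have T0 : 0 <= T by apply: sumr_ge0 => j _; exact: pS.
have Sij i j : S i j = X i j - x i 0 * x j 0 by rewrite !mxE big_ord1 !mxE.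
have Ssym i j : S j i = S i j by rewrite -[S in LHS]sS mxE.
have Xsym i j : X j i = X i j by rewrite -[X in LHS]sX mxE.
have hX : X i1 i2 = x i3 0.
  by move: hc; rewrite trEE cE (Xsym i1 i2) => hc; lra.
set δ : R := S i1 i2.
have hδ : x i3 0 = x i1 0 * x i2 0 + δ by rewrite /δ Sij hX; ring.
clearbody S.
have [d0|dn0] := eqVneq δ 0.
  have := hp x; rewrite /nc1_feas rfunE hδ d0 => /(_ ltac:(ring)) h.
  have : 0 <= 2^-1 * T by rewrite mulr_ge0 // invr_ge0.
  lra.
pose σ : R := if 0 < δ then 1 else -1.
have sd : 0 < σ * δ.
  rewrite /σ; case: ifP => h; first by rewrite mul1r.
  have : δ < 0 by rewrite lt_neqAle dn0 leNgt h.
  by move=> h'; rewrite mulN1r oppr_gt0.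
pose ε1 : 'cV[R]_4 := \col_k (if k == 1%N :> nat then 1 else 0).
pose ε2 : 'cV[R]_4 := \col_k (if k == 2%N :> nat then 1 else 0).
pose e : 'cV[R]_4 := \col_k (if k == 1%N :> nat then 1 else if k == 2%N :> nat then σ else 0).
have B12 : Bf S ε1 ε2 = δ by rewrite /Bf /ε1 /ε2 !(mxE, sum4) /= -/δ; ring.
have B11 : Bf S ε1 ε1 = S i1 i1 by rewrite /Bf /ε1 !(mxE, sum4) /=; ring.
have B22 : Bf S ε2 ε2 = S i2 i2 by rewrite /Bf /ε2 !(mxE, sum4) /=; ring.
have C12 := CS ε1 ε2 sS pS.
rewrite B12 B11 B22 in C12.
have S11 : 0 <= S i1 i1 by rewrite -B11; apply: pS.
have S22 : 0 <= S i2 i2 by rewrite -B22; apply: pS.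
have kE : Bf S e e = S i1 i1 + σ * δ + σ * δ + σ ^+ 2 * S i2 i2.
  rewrite /Bf /e !(mxE, sum4) /= (Ssym i1 i2) -/δ; ring.
move: kE; set k := Bf S e e => kE.
have [w wE] : exists w : 'cV[R]_4, w = S *m e by eexists.
have wi i : w i 0 = S i i1 + σ * S i i2.
  rewrite wE /e !(mxE, sum4) /=; ring.
pose qw := w i1 0 * w i2 0.
have key : δ * qw - k * δ ^+ 2 = (σ * δ) * (S i1 i1 * S i2 i2 - δ ^+ 2).
  rewrite /qw !wi kE (Ssym i1 i2) -/δ; ring.
have kpos : 0 < k.
  rewrite kE; have : 0 <= σ ^+ 2 * S i2 i2 by rewrite mulr_ge0 // sqr_ge0.
  lra.
have nn : 0 <= (σ * δ) * (S i1 i1 * S i2 i2 - δ ^+ 2).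
  by rewrite mulr_ge0 // ?subr_ge0 // ltW.
have qd : 0 < δ * qw.
  have : 0 < k * δ ^+ 2 by rewrite mulr_gt0 // exprn_even_gt0 //.
  have : 0 <= (σ * δ) * (S i1 i1 * S i2 i2 - δ ^+ 2).
    by rewrite mulr_ge0 // ?subr_ge0 // ltW.
  lra.
have qn0 : qw != 0 by apply/eqP => q0; move: qd; rewrite q0 mulr0 ltxx.
pose P := δ / qw.
have Ppos : 0 < P.
  have -> : P = (δ * qw) / (qw ^+ 2) by rewrite /P; field.
  by rewrite divr_gt0 // exprn_even_gt0.
have Pk : P * k <= 1.
  have -> : P * k = (k * δ ^+ 2) / (δ * qw) by rewrite /P; field; rewrite qn0 dn0.
  by rewrite ler_pdivrMr // mul1r; move: nn; rewrite -key; lra.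
pose L := x i1 0 * w i2 0 + x i2 0 * w i1 0 - w i3 0.
pose Δ := L / qw.
pose sq := Num.sqrt (Δ ^+ 2 + 4 * P).
have sq0 : 0 <= sq := sqrtr_ge0 _.
have sq2 : sq ^+ 2 = Δ ^+ 2 + 4 * P.
  by rewrite /sq sqr_sqrtr // addr_ge0 ?sqr_ge0 // mulr_ge0 // ltW.
pose a := (sq - Δ) / 2.
pose β := (sq + Δ) / 2.
have ha : 0 < a by rewrite /a divr_gt0 //; nra.
have hb : 0 < β by rewrite /β divr_gt0 //; nra.
have abP : a * β = P.
  have -> : a * β = (sq ^+ 2 - Δ ^+ 2) / 4 by rewrite /a /β; field.
  by rewrite sq2; field.
have hab : a * β * qw = δ by rewrite abP /P; field.
have hL : (β - a) * qw = L.
  have -> : β - a = Δ by rewrite /a /β; field.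
  by rewrite /Δ; field.
have f1 : nc1_feas (x + a *: w).
  rewrite /nc1_feas rfunE !mxE hδ.
  have -> : (x i1 0 + a * w i1 0) * (x i2 0 + a * w i2 0) -
     (x i1 0 * x i2 0 + δ + a * w i3 0) = a * L + a ^+ 2 * qw - δ by rewrite /L /qw; ring.
  rewrite -hL -hab; ring.
have f2 : nc1_feas (x - β *: w).
  rewrite /nc1_feas rfunE !mxE hδ.
  have -> : (x i1 0 - β * w i1 0) * (x i2 0 - β * w i2 0) -
     (x i1 0 * x i2 0 + δ - β * w i3 0) = - β * L + β ^+ 2 * qw - δ by rewrite /L /qw; ring.
  rewrite -hL -hab; ring.
have p1 := hp _ f1.
have p2 := hp _ f2.
move: p1 p2; rewrite /nc1_obj.
have -> : D *m (x + a *: w) - b = (D *m x - b) + a *: (D *m w).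
  by rewrite mulmxDr scalemxAr addrAC.
have -> : D *m (x - β *: w) - b = (D *m x - b) - β *: (D *m w).
  by rewrite mulmxBr scalemxAr addrAC.
rewrite -!/(dot _ _) => p1 p2.
have comb := dot_comb (D *m x - b) (D *m w) a β.
have vv : dot (D *m w) (D *m w) <= k * T.
  rewrite dotE /T mulr_sumr; apply: ler_sum => j _.
  rewrite wE Dw_Bf -expr2 mulrC; exact: CS.
have H1 : a * β * dot (D *m w) (D *m w) <= T.
  rewrite abP; apply: (le_trans (ler_wpM2l (ltW Ppos) vv)).
  rewrite mulrA -[leRHS]mul1r; apply: ler_wpM2r => //.
nra.
Qed.

Implicit Types (f g : 'rV[R]_3 -> R).

Lemma cM f g : continuous f -> continuous g -> continuous (fun y => f y * g y).
Proof. by move=> hf hg y; exact: (cvgM (hf y) (hg y)). Qed.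
Lemma cD f g : continuous f -> continuous g -> continuous (fun y => f y + g y).
Proof. by move=> hf hg y; exact: (cvgD (hf y) (hg y)). Qed.
Lemma cN f : continuous f -> continuous (fun y => - f y).
Proof. by move=> hf y; exact: (cvgN (hf y)). Qed.
Lemma cC (c : R) : continuous (fun _ : 'rV[R]_3 => c).
Proof. exact: cst_continuous. Qed.
Lemma cP j : continuous (fun y : 'rV[R]_3 => y 0 j).
Proof. exact: coord_continuous. Qed.
Lemma cS n (F : 'I_n -> 'rV[R]_3 -> R) : (forall i, continuous (F i)) ->
  continuous (fun y => \sum_i F i y).
Proof.
elim: n F => [|n IH] F hF.
  have -> : (fun y => \sum_(i < 0) F i y) = fun=> 0.
    by apply: funext => y; rewrite big_ord0.
  exact: cC.
have -> : (fun y => \sum_(i < n.+1) F i y) = fun y => \sum_(i < n) F (widen_ord (leqnSn n) i) y + F ord_max y.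
  by apply: funext => y; rewrite big_ord_recr.
by apply: cD; [apply: IH => i; apply: hF|apply: hF].
Qed.


Lemma absle (t : R) : `|t| <= 1 + t ^+ 2.
Proof. rewrite -(real_normK (num_real t)); have := normr_ge0 t; nra. Qed.

Lemma attain m (D : 'M[R]_(m, 4)) b : \rank D = 4%N ->
  exists xs, nc1_feas xs /\ forall x, nc1_feas x -> nc1_obj D b xs <= nc1_obj D b x.
Proof.
move=> hr.
have [Lm hL] : exists Lm : 'M[R]_(4, m), Lm *m D = 1%:M.
  have : row_free D^T by rewrite /row_free mxrank_tr hr.
  move/row_freeP => [B hB]; exists B^T.
  by rewrite -[D]trmxK -trmx_mul hB trmx1.
pose φ (y : 'rV[R]_3) : 'cV[R]_4 :=
  \col_k (if (k < 3)%N then y 0 (inord k) else y 0 (inord 1) * y 0 (inord 2)).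
have φf y : nc1_feas (φ y) by rewrite /nc1_feas rfunE /φ !mxE /=; ring.
pose g y := nc1_obj D b (φ y).
have hφ k : continuous (fun y => φ y k 0).
  rewrite /φ; under eq_fun do rewrite mxE.
  case: (k < 3)%N; first exact: cP.
  by apply: cM; apply: cP.
have gc : continuous g.
  have -> : g = fun y => 2^-1 * \sum_j (\sum_k D j k * φ y k 0 - b j 0) * (\sum_k D j k * φ y k 0 - b j 0).
    apply: funext => y; rewrite /g /nc1_obj -/(dot _ _) dotE; congr (_ * _).
    by apply: eq_bigr => j _; rewrite !mxE.
  apply: cM; first exact: cC.
  apply: cS => j.
  have hu : continuous (fun y => \sum_k D j k * φ y k 0 - b j 0).
    apply: cD; last exact: cC.
    by apply: cS => k; apply: cM; [exact: cC | exact: hφ].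
  exact: (cM hu hu).
pose A := [set y | g y <= g 0].
have Acl : closed A.
  have -> : A = g @^-1` [set r | r <= g 0] by [].
  apply: preimage_closed; last exact: closed_le.
  by move=> y _; apply: gc.
have φw y (j : 'I_3) : φ y (widen_ord (leqnSn 3) j) 0 = y 0 j.
  rewrite /φ mxE /= ltn_ord; congr (y 0 _); apply: val_inj => /=; exact: inordK.
pose K0 := g 0.
pose Kk k := \sum_j `|Lm k j| * (1 + 2 * K0 + `|b j 0|).
pose K := \sum_k Kk k.
have Kk0 k : 0 <= Kk k.
  apply: sumr_ge0 => j _; apply: mulr_ge0 => //.
  have : 0 <= K0 by rewrite /K0 /g /nc1_obj -/(dot _ _) dotE mulr_ge0 // ?invr_ge0 // sumr_ge0 // => i _; rewrite -expr2 sqr_ge0.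
  have := normr_ge0 (b j 0); lra.
have KkK k : Kk k <= K.
  by rewrite /K (bigD1 k) //= lerDl sumr_ge0.
have xbound y : A y -> forall k, `|φ y k 0| <= Kk k.
  move=> Ay k.
  pose u := D *m φ y - b.
  have usum : \sum_j u j 0 * u j 0 <= 2 * K0.
    have : g y <= K0 := Ay. rewrite /g /nc1_obj -/(dot _ _) dotE -/u; lra.
  have ub j : `|u j 0| <= 1 + 2 * K0.
    apply: (le_trans (absle _)); rewrite lerD2l expr2; apply: le_trans usum.
    by rewrite (bigD1 j) //= lerDl sumr_ge0 // => i _; rewrite -expr2 sqr_ge0.
  have xe : φ y = Lm *m (u + b) by rewrite /u subrK mulmxA hL mul1mx.
  rewrite xe mxE; apply: (le_trans (ler_norm_sum _ _ _)); apply: ler_sum => j _.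
  rewrite normrM ler_wpM2l // mxE; apply: (le_trans (ler_normD _ _)).
  by rewrite lerD2r.
have Abd : bounded_set A.
  exists K; split; first exact: num_real.
  move=> M KM v Av.
  rewrite /=; have -> : `|v| = mx_norm v by []. rewrite mx_normrE; apply: bigmax_le.
    apply: le_trans (ltW KM); apply: sumr_ge0 => k _; exact: Kk0.
  case=> i j _ /=; rewrite (ord1 i) -φw; apply: le_trans (ltW KM).
  by apply: le_trans (xbound _ Av _) (KkK _).
have Acp : compact A by apply: bounded_closed_compact.
have A0 : A !=set0 by exists 0; rewrite /A /=.
have [c cA cmin] := EVT_min_rV A0 Acp (continuous_subspaceT gc).
exists (φ c); split; first exact: φf.
move=> x fx.
pose y : 'rV[R]_3 := \row_j x (widen_ord (leqnSn 3) j) 0.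
have φy : φ y = x.
  apply/matrixP => k l; rewrite (ord1 l) /φ !mxE.
  case: ifP => hk.
    by congr (x _ 0); apply: val_inj => /=; rewrite inordK.
  have -> : k = i3.
    apply: val_inj => /=; move/negbT: hk; rewrite -leqNgt; have := ltn_ord k; lia.
  move: fx; rewrite /nc1_feas rfunE => fx.
  have e1 : widen_ord (leqnSn 3) (inord 1) = i1 by apply: val_inj => /=; rewrite inordK.
  have e2 : widen_ord (leqnSn 3) (inord 2) = i2 by apply: val_inj => /=; rewrite inordK.
  rewrite e1 e2; lra.
rewrite -φy; have := cmin; rewrite /= => cm.
have [Ay|nAy] := boolP (g y <= g 0).
  by apply: cm; rewrite inE.
have h2 : g c <= g 0 by apply: cm; rewrite inE /A /=.
move: nAy; rewrite -ltNge => h1; exact: (le_trans h2 (ltW h1)).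
Qed.
End Main.

Theorem lemma1 (R : realType) (m : nat) (D : 'M[R]_(m, 4)) (b : 'cV[R]_m) :
  (4 <= m)%N -> \rank D = 4%N ->
  exists xs : 'cV[R]_4,
    (* xs is an optimal (attained) solution of (NC1) *)
    nc1_feas xs /\ (forall x, nc1_feas x -> nc1_obj D b xs <= nc1_obj D b x) /\
    (* (P) has the same optimal value, also attained *)
    (forall X x, P_feas X x -> nc1_obj D b xs <= P_obj D b X x) /\
    (exists Xs xs', P_feas Xs xs' /\ P_obj D b Xs xs' = nc1_obj D b xs).
Proof.
move=> _ hr.
have [xs [fxs hmin]] := attain b hr.
exists xs; split => //; split => //; split; first exact: relax hmin.
exists (xs *m xs^T), xs; split; last first.
  by rewrite Pobj_split subrr mulmx0 linear0 mulr0 addr0.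
split; first by rewrite /symmetric_mx trmx_mul trmxK.
split.
  rewrite subrr; split; first by rewrite /symmetric_mx trmx0.
  by move=> v; rewrite mulmx0 mul0mx mxE.
move: fxs; rewrite /nc1_feas rfunE trEE cE !mxE !big_ord1 !mxE => h.
lra.
Qed.
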